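(* In the standing setup with a single fluid, and with $t_{\mathrm b},\xi_0,t_0$ as in the time-interval setup, write $h_{\mathrm b}=h(t_{\mathrm b})$, $x_{\mathrm b}=x(t_{\mathrm b})$. Then for all $t\in[t_{\mathrm b},t_0]$, $$|x(t)|\ \le\ \frac{1}{\big[1+\xi_0h_{\mathrm b}(t-t_{\mathrm b})\big]^{\frac{1}{\xi_0}-1}}\Big[|x_{\mathrm b}|-\frac{\sqrt2\,c\,l}{h_{\mathrm b}}\Big]+\sqrt2\,c\,l\Big[\xi_0(t-t_{\mathrm b})+\frac{1}{h_{\mathrm b}}\Big].$$
   Context: Standing setup. Fix real constants $c>0$ and $l>0$, a nonempty finite index set $A$, and constants $w_\alpha\in[-1,1]$ for $\alpha\in A$. Let $I\subseteq\mathbb{R}$ be an interval and let $x,y_{\mathrm r},y_{\mathrm i},h,z_\alpha$ ($\alpha\in A$) be real $C^1$ functions of $t\in I$ with $h>0$ and $z_\alpha\ge 0$. Define $\xi(t)=x(t)^2+\sum_{\beta\in A}\frac{1+w_\beta}{2}z_\beta(t)^2$. Assume that on $I$: $\dot x=\big[-x+4c\,y_{\mathrm r}y_{\mathrm i}+x\,\xi\big]h$, $\dot y_{\mathrm r}=\big[\xi\,y_{\mathrm r}-c\,x\,y_{\mathrm i}\big]h$, $\dot y_{\mathrm i}=\big[\xi\,y_{\mathrm i}+c\,x\,y_{\mathrm r}\big]h$, $\dot z_\alpha=\big[-\tfrac{1+w_\alpha}{2}+\xi\big]z_\alpha h$, $\dot h=-\xi h^2$, together with the constraints $x^2+4y_{\mathrm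 r}^2+\sum_{\beta\in A}z_\beta^2=1$ and $y_{\mathrm r}^2+y_{\mathrm i}^2=\frac{l^2}{2h^2}$. Single fluid: $A$ has exactly one element; write $z$ and $w$ for $z_\alpha$ and $w_\alpha$. Time-interval setup: let $t_{\mathrm b}\in I$, $\xi_{\mathrm b}:=\xi(t_{\mathrm b})$, and let $\xi_0$ be a real number with $\xi_0>0$ and $\xi_{\mathrm b}\le\xi_0\le\frac{1+w}{2}$. Assume the set $\{t\in I:\ t\ge t_{\mathrm b},\ \xi(t)=\xi_0\}$ is nonempty and let $t_0$ be its minimum (so $\xi(t)\le\xi_0$ for all $t\in[t_{\mathrm b},t_0]$); put $\Delta t_{\mathrm b0}=t_0-t_{\mathrm b}$. *)

(* Defs.v *)
From Stdlib Require Import Reals Lra.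
From Coquelicot Require Import Coquelicot.
Open Scope R_scope.

Definition is_interval (I : R -> Prop) : Prop :=
  forall a b c, I a -> I c -> a <= b -> b <= c -> I b.

Definition has_deriv_in (I : R -> Prop) (f : R -> R) (t d : R) : Prop :=
  filterlim (fun s => (f s - f t) / (s - t))
    (within (fun s => I s /\ s <> t) (locally t)) (locally d).

Definition C1_on (I : R -> Prop) (f f' : R -> R) : Prop :=
  (forall t, I t -> has_deriv_in I f t (f' t)) /\
  (forall t, I t -> filterlim f' (within I (locally t)) (locally (f' t))).

(* Main.v *)
Require Import Defs.
From Stdlib Require Import Reals Lra Psatz.
From Coquelicot Require Import Coquelicot.
Open Scope R_scope.

Definition cw (f : R->R) a b s :=
  filterlim f (within (fun u => a<=u<=b) (locally s)) (locally (f s)).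

Lemma cw_ed f a b s : cw f a b s -> forall eps, 0 < eps ->
  exists delta, 0 < delta /\ forall u, a<=u<=b -> Rabs (u-s) < delta -> Rabs (f u - f s) < eps.
Proof.
  intros H eps He.
  destruct (proj1 (filterlim_locally _ _) H (mkposreal eps He)) as [d Hd].
  exists d; split; [apply cond_pos|]. intros u Hu Hus. exact (Hd u Hus Hu).
Qed.

Lemma ed_cw f a b s : (forall eps, 0 < eps ->
  exists delta, 0 < delta /\ forall u, a<=u<=b -> Rabs (u-s) < delta -> Rabs (f u - f s) < eps) -> cw f a b s.
Proof.
  intros H. apply filterlim_locally. intros eps.
  destruct (H eps (cond_pos eps)) as [d [Hd H']].
  exists (mkposreal d Hd). intros y Hy Hy'. exact (H' y Hy' Hy).
Qed.

Lemma cw_mult f g a b s : cw f a b s -> cw g a b s -> cw (fun u => f u * g u) a b s.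
Proof.
  intros Hf Hg. unfold cw.
  exact (filterlim_comp_2 f g Rmult Hf Hg (filterlim_mult (K:=R_AbsRing) (f s) (g s))).
Qed.

Lemma cw_plus f g a b s : cw f a b s -> cw g a b s -> cw (fun u => f u + g u) a b s.
Proof.
  intros Hf Hg. unfold cw.
  exact (filterlim_comp_2 f g Rplus Hf Hg (filterlim_plus (K:=R_AbsRing) (V:=R_NormedModule) (f s) (g s))).
Qed.

Lemma cw_glob f a b s : continuous f s -> cw f a b s.
Proof.
  intros H. unfold cw. eapply filterlim_filter_le_1; [|exact H].
  apply filter_le_within.
Qed.

Lemma hd_cw I f a b s d : (forall u, a<=u<=b -> I u) -> has_deriv_in I f s d -> cw f a b s.
Proof.
  intros HI H. apply ed_cw. intros eps He.
  destruct (proj1 (filterlim_locally _ _) H (mkposreal 1 Rlt_0_1)) as [d1 Hd1].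
  exists (Rmin d1 (eps / (Rabs d + 1))). split.
  { apply Rmin_pos; [apply cond_pos|]. apply Rdiv_lt_0_compat; [lra|].
    pose proof (Rabs_pos d); lra. }
  intros u Hu Hus.
  destruct (Req_dec u s) as [->|Hne].
  { rewrite Rminus_eq_0, Rabs_R0; lra. }
  assert (Hb : ball s d1 u).
  { apply Rlt_le_trans with (1 := Hus). apply Rmin_l. }
  specialize (Hd1 u Hb (conj (HI u Hu) Hne)). simpl in Hd1.
  change (Rabs ((f u - f s)/(u - s) - d) < 1) in Hd1.
  assert (Hq : Rabs ((f u - f s)/(u-s)) <= Rabs d + 1).
  { pose proof (Rabs_triang_inv ((f u - f s)/(u-s)) d). lra. }
  replace (f u - f s) with ((f u - f s)/(u-s) * (u - s)) by (field; lra).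
  rewrite Rabs_mult.
  assert (Hus2 : Rabs (u - s) < eps / (Rabs d + 1)).
  { apply Rlt_le_trans with (1 := Hus). apply Rmin_r. }
  assert (0 < Rabs d + 1) by (pose proof (Rabs_pos d); lra).
  apply Rle_lt_trans with ((Rabs d + 1) * Rabs (u - s)).
  { apply Rmult_le_compat_r; [apply Rabs_pos|exact Hq]. }
  apply Rmult_lt_reg_r with (/ (Rabs d + 1)). { apply Rinv_0_lt_compat; lra. }
  replace ((Rabs d + 1) * Rabs (u - s) * / (Rabs d + 1)) with (Rabs (u-s)) by (field; lra).
  exact Hus2.
Qed.

Lemma hd_lim I f t d r g : 0 < r -> (forall s, Rabs (s - t) < r -> I s) ->
  has_deriv_in I f t d -> (forall s, Rabs (s - t) < r -> g s = f s) -> is_derive g t d.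
Proof.
  intros Hr HI H Hg. apply is_derive_Reals. intros eps He.
  destruct (proj1 (filterlim_locally _ _) H (mkposreal eps He)) as [d1 Hd1].
  assert (Hp : 0 < Rmin d1 r) by (apply Rmin_pos; [apply cond_pos|lra]).
  exists (mkposreal _ Hp). intros h Hh0 Hh. simpl in Hh.
  assert (H1 : Rabs (t + h - t) < d1).
  { replace (t+h-t) with h by ring. apply Rlt_le_trans with (1:=Hh); apply Rmin_l. }
  assert (H2 : Rabs (t + h - t) < r).
  { replace (t+h-t) with h by ring. apply Rlt_le_trans with (1:=Hh); apply Rmin_r. }
  assert (H3 : Rabs (t - t) < r) by (rewrite Rminus_eq_0, Rabs_R0; lra).
  rewrite (Hg _ H2), (Hg _ H3).
  assert (Hne : t + h <> t) by (intro; apply Hh0; lra).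
  specialize (Hd1 (t+h) H1 (conj (HI _ H2) Hne)). simpl in Hd1.
  change (Rabs ((f (t+h) - f t)/(t+h - t) - d) < eps) in Hd1.
  replace (t + h - t) with h in Hd1 by ring. exact Hd1.
Qed.

Lemma last_point F a t M : a <= t -> F a <= M -> M < F t ->
  (forall s, a <= s <= t -> cw F a t s) ->
  exists m, a <= m < t /\ F m = M /\ forall s, m < s <= t -> M < F s.
Proof.
  intros Hat Ha Ht Hc.
  set (E := fun s => a <= s <= t /\ F s <= M).
  assert (HB : bound E) by (exists t; intros s [Hs _]; lra).
  assert (HE : exists s, E s) by (exists a; split; [lra|exact Ha]).
  destruct (completeness E HB HE) as [m [Hub Hlub]].
  assert (Ham : a <= m) by (apply Hub; split; [lra|exact Ha]).
  assert (Hmt : m <= t) by (apply Hlub; intros s [Hs _]; lra).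
  assert (HA : forall s, m < s <= t -> M < F s).
  { intros s Hs. destruct (Rle_lt_dec (F s) M) as [Hle|Hlt]; [|exact Hlt].
    assert (s <= m) by (apply Hub; split; [lra|exact Hle]). lra. }
  assert (Hm1 : F m <= M).
  { destruct (Rle_lt_dec (F m) M) as [Hle|Hlt]; [exact Hle|exfalso].
    destruct (cw_ed _ _ _ _ (Hc m (conj Ham Hmt)) (F m - M) ltac:(lra)) as [d [Hd Hd']].
    assert (Hb : m <= Rmax a (m - d/2)).
    { apply Hlub. intros s [Hs Hs'].
      assert (s <= m) by (apply Hub; split; assumption).
      destruct (Rle_lt_dec s (m - d/2)) as [H1|H1].
      - apply Rle_trans with (m - d/2); [exact H1| apply Rmax_r].
      - exfalso. assert (Rabs (s - m) < d) by (rewrite Rabs_left1; lra).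
        specialize (Hd' s Hs H0). pose proof (Rabs_def2 _ _ Hd'). lra. }
    unfold Rmax in Hb. destruct (Rle_dec a (m - d/2)); [lra|].
    assert (m = a) by lra. subst m. lra. }
  assert (Hmt' : m < t) by (destruct (Req_dec m t); [subst; lra|lra]).
  exists m. split; [lra|]. split; [|exact HA].
  destruct (Rle_lt_dec M (F m)) as [Hle|Hlt]; [lra|exfalso].
  destruct (cw_ed _ _ _ _ (Hc m (conj Ham Hmt)) (M - F m) ltac:(lra)) as [d [Hd Hd']].
  set (s := Rmin t (m + d/2)).
  assert (Hs1 : m < s) by (unfold s, Rmin; destruct (Rle_dec t (m + d/2)); lra).
  assert (Hs2 : s <= m + d/2) by apply Rmin_r.
  assert (Hs3 : s <= t) by apply Rmin_l.
  assert (Rabs (s - m) < d) by (rewrite Rabs_right; lra).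
  specialize (Hd' s ltac:(lra) H). pose proof (Rabs_def2 _ _ Hd').
  specialize (HA s ltac:(lra)). lra.
Qed.

Lemma nonincr f df a b : a < b -> (forall s, a <= s <= b -> cw f a b s) ->
  (forall s, a < s < b -> is_derive f s (df s)) ->
  (forall s, a < s < b -> df s <= 0) -> f b <= f a.
Proof.
  intros Hab Hc Hd Hneg.
  set (cl := fun s => Rmax a (Rmin b s)).
  assert (Hcl : forall s, a <= cl s <= b).
  { intros s; unfold cl, Rmax, Rmin; repeat destruct Rle_dec; lra. }
  assert (Hcl2 : forall s u, Rabs (cl u - cl s) <= Rabs (u - s)).
  { intros s u; unfold cl, Rmax, Rmin; repeat destruct Rle_dec;
      unfold Rabs; repeat destruct Rcase_abs; lra. }
  assert (Hcl3 : forall s, a <= s <= b -> cl s = s).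
  { intros s Hs; unfold cl, Rmax, Rmin; repeat destruct Rle_dec; lra. }
  set (g := fun s => f (cl s)).
  set (dg := fun s => if Rlt_dec a s then if Rlt_dec s b then df s else 0 else 0).
  destruct (MVT_gen g a b dg) as [c [Hc1 Hc2]].
  - rewrite Rmin_left, Rmax_right by lra. intros x Hx.
    unfold dg; destruct Rlt_dec; [|lra]; destruct Rlt_dec; [|lra].
    apply is_derive_ext_loc with f; [|apply Hd; lra].
    exists (mkposreal (Rmin (x - a) (b - x)) ltac:(apply Rmin_pos; lra)).
    intros y Hy. change (Rabs (y - x) < Rmin (x - a) (b - x)) in Hy.
    pose proof (Rmin_l (x-a) (b-x)); pose proof (Rmin_r (x-a) (b-x)).
    pose proof (Rabs_def2 _ _ Hy).
    unfold g; rewrite Hcl3; [reflexivity|lra].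
  - intros x _. apply continuity_pt_filterlim. apply filterlim_locally. intros eps.
    destruct (cw_ed _ _ _ _ (Hc (cl x) (Hcl x)) eps (cond_pos eps)) as [d [Hd0 Hd']].
    exists (mkposreal d Hd0). intros y Hy. change (Rabs (g y - g x) < eps).
    apply Hd'. apply Hcl. apply Rle_lt_trans with (1 := Hcl2 x y). exact Hy.
  - unfold g in Hc2. rewrite !Hcl3 in Hc2 by lra.
    assert (dg c <= 0).
    { unfold dg; destruct Rlt_dec; [|lra]; destruct Rlt_dec; [|lra]. apply Hneg; lra. }
    nra.
Qed.

Lemma cw_sub f a b a' b' s : a <= a' -> b' <= b -> a' <= s <= b' -> cw f a b s -> cw f a' b' s.
Proof.
  intros H1 H2 Hs H. apply ed_cw. intros eps He.
  destruct (cw_ed _ _ _ _ H eps He) as [d [Hd Hd']].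
  exists d; split; [exact Hd|]. intros u Hu Hus. apply Hd'; [lra|exact Hus].
Qed.

Lemma is_derive_eq (f : R -> R) x l l' : is_derive f x l -> l = l' -> is_derive f x l'.
Proof. intros H ->; exact H. Qed.

Lemma der_plus (f g : R -> R) x df dg : is_derive f x df -> is_derive g x dg ->
  is_derive (fun t => f t + g t) x (df + dg).
Proof. intros H1 H2. exact (is_derive_plus f g x df dg H1 H2). Qed.

Lemma der_mult (f g : R -> R) x df dg : is_derive f x df -> is_derive g x dg ->
  is_derive (fun t => f t * g t) x (df * g x + f x * dg).
Proof. intros H1 H2. exact (is_derive_mult f g x df dg H1 H2 Rmult_comm). Qed.

Lemma der_scal (f : R -> R) k x df : is_derive f x df ->
  is_derive (fun t => k * f t) x (k * df).
Proof. intros H1. exact (is_derive_scal f x k df H1). Qed.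

Lemma key (v dv hh xi e : R -> R) a b hb xi0 K :
  a <= b -> 0 < xi0 <= 1 -> 0 < hb -> 0 <= K ->
  (forall s, a <= s <= b -> cw v a b s) ->
  (forall s, a < s < b -> is_derive v s (dv s)) ->
  (forall s, a < s < b -> dv s = (- v s + e s + v s * xi s) * hh s) ->
  (forall s, a < s < b -> xi s <= xi0) ->
  (forall s, a < s < b -> hb / (1 + xi0 * hb * (s - a)) <= hh s) ->
  (forall s, a < s < b -> Rabs (e s * hh s) <= K) ->
  forall t, a <= t <= b ->
    v t <= 1 / Rpower (1 + xi0 * hb * (t - a)) (1 / xi0 - 1) * (Rabs (v a) - K / hb)
           + K * (xi0 * (t - a) + 1 / hb).
Proof.
  intros Hab Hxi0 Hhb HK Hvc Hvd Hdv Hxi Hhh He t Ht.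
  set (al := 1 / xi0 - 1).
  assert (Hal : 0 <= al).
  { unfold al. assert (1 <= 1/xi0). { apply Rmult_le_reg_r with xi0; [lra|].
      field_simplify; lra. } lra. }
  set (L := fun s => 1 + xi0 * hb * (s - a)).
  set (P := fun s => exp (al * ln (L s))).
  assert (HL : forall s, a <= s -> 1 <= L s).
  { intros s Hs; unfold L. assert (0 <= xi0 * hb * (s - a)).
    { apply Rmult_le_pos; [apply Rmult_le_pos|]; lra. } lra. }
  assert (HP0 : forall s, 0 < P s) by (intros; apply exp_pos).
  assert (Hln : forall s, a <= s -> 0 <= ln (L s)).
  { intros s Hs. destruct (Req_dec (L s) 1) as [E|E].
    - rewrite E, ln_1; lra.
    - rewrite <- ln_1. left. apply ln_increasing; [lra|]. pose proof (HL s Hs); lra. }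
  assert (HP1 : forall s, a <= s -> 1 <= P s).
  { intros s Hs. unfold P. pose proof (exp_ineq1_le (al * ln (L s))).
    pose proof (Hln s Hs). assert (0 <= al * ln (L s)) by (apply Rmult_le_pos; lra). lra. }
  assert (HPd : forall s, a <= s -> is_derive P s (al * (xi0 * hb) / L s * P s)).
  { intros s Hs. pose proof (HL s Hs). unfold P, L in *. auto_derive.
    - lra.
    - unfold Rminus; field; lra. }
  set (Phi := fun s => P s * v s + (- K / hb) * (L s * P s)).
  set (M := Rabs (v a) - K / hb).
  assert (HcPhi : forall s, a <= s <= t -> cw Phi a t s).
  { intros s Hs. unfold Phi. apply cw_plus.
    - apply cw_mult.
      + apply cw_glob. apply (ex_derive_continuous (K:=R_AbsRing) (V:=R_NormedModule)). eexists; apply HPd; lra.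
      + apply cw_sub with a b; try lra. apply Hvc; lra.
    - apply cw_glob. apply (ex_derive_continuous (K:=R_AbsRing) (V:=R_NormedModule)). unfold L.
      apply ex_derive_scal, ex_derive_mult.
      + auto_derive; auto.
      + eexists; apply HPd; lra. }
  assert (Ea : Phi a <= M).
  { unfold Phi, M, P, L. replace (a - a) with 0 by ring.
    rewrite Rmult_0_r, Rplus_0_r, ln_1, Rmult_0_r, exp_0.
    pose proof (Rle_abs (v a)). lra. }
  assert (Hpos : forall s, a <= s -> M < Phi s -> 0 < v s).
  { intros s Hs H. unfold Phi, M in H. pose proof (HP1 s Hs). pose proof (HL s Hs).
    assert (1 <= L s * P s) by nra.
    assert (- K / hb * (L s * P s) <= - K / hb).
    { unfold Rdiv. rewrite !Rmult_assoc. assert (0 <= K * / hb).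
      { apply Rmult_le_pos; [lra|]. left; apply Rinv_0_lt_compat; lra. }
      nra. }
    pose proof (Rabs_pos (v a)). nra. }
  destruct (Rle_lt_dec (v t) (1 / Rpower (1 + xi0 * hb * (t - a)) (1 / xi0 - 1) * (Rabs (v a) - K / hb)
           + K * (xi0 * (t - a) + 1 / hb))) as [Hok|Hbad]; [exact Hok|exfalso].
  assert (Et : M < Phi t).
  { fold al in Hbad. unfold Rpower in Hbad. fold (L t) in Hbad. fold (P t) in Hbad.
    pose proof (HP0 t). unfold Phi, M.
    replace (K * (xi0 * (t - a) + 1 / hb)) with (K / hb * L t) in Hbad by (unfold L; field; lra).
    apply Rmult_lt_compat_r with (r := P t) in Hbad; [|lra].
    replace ((1 / P t * (Rabs (v a) - K / hb) + K / hb * L t) * P t)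
      with (Rabs (v a) - K / hb + K / hb * (L t * P t)) in Hbad by (field; lra).
    lra. }
  destruct (last_point Phi a t M ltac:(lra) Ea Et HcPhi) as [m [Hm1 [Hm2 Hm3]]].
  assert (Phi t <= Phi m).
  { apply nonincr with (df := fun s => (al * (xi0 * hb) / L s * P s) * v s + P s * dv s
        + (- K / hb) * (xi0 * hb * P s + L s * (al * (xi0 * hb) / L s * P s))).
    - lra.
    - intros s Hs. apply cw_sub with a t; try lra. apply HcPhi; lra.
    - intros s Hs. unfold Phi.
      assert (HLd : is_derive L s (xi0 * hb)) by (unfold L; auto_derive; [auto|ring]).
      eapply is_derive_eq.
      + apply der_plus.
        * apply der_mult.
          -- apply HPd; lra.
          -- apply Hvd; lra.
        * apply der_scal. apply der_mult.
          -- exact HLd.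
          -- apply HPd; lra.
      + reflexivity.
    - intros s Hs.
      assert (Hs' : a < s < b) by lra.
      assert (Has : a <= s) by lra. assert (Hst : m < s <= t) by lra.
      pose proof (Hpos s Has (Hm3 s Hst)) as Hv.
      pose proof (HL s Has). pose proof (HP0 s).
      assert (Hg : 0 < hb / L s) by (apply Rdiv_lt_0_compat; lra).
      pose proof (Hhh s Hs') as Hh. change (hb / L s <= hh s) in Hh. pose proof (Hxi s Hs') as Hx.
      pose proof (He s Hs') as Hee. pose proof (Rle_abs (e s * hh s)).
      replace (al * (xi0 * hb) / L s * P s * v s + P s * dv s +
        - K / hb * (xi0 * hb * P s + L s * (al * (xi0 * hb) / L s * P s)))
        with (P s * (v s * ((1 - xi0) * (hb / L s) - (1 - xi s) * hh s) + e s * hh s - K))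
        by (rewrite (Hdv s Hs'); unfold al; field; lra).
      assert (v s * ((1 - xi0) * (hb / L s) - (1 - xi s) * hh s) <= 0).
      { assert ((1 - xi0) * (hb / L s) <= (1 - xi s) * hh s).
        { apply Rle_trans with ((1 - xi0) * hh s).
          - apply Rmult_le_compat_l; [lra|exact Hh].
          - apply Rmult_le_compat_r; lra. }
        nra. }
      nra.
  }
  lra.
Qed.

Lemma cw_ext f g a b s : (forall u, f u = g u) -> cw f a b s -> cw g a b s.
Proof. intros H Hf. unfold cw. rewrite <- H. exact (filterlim_ext f g H Hf). Qed.

Lemma cw_comp f g a b s : cw f a b s -> continuous g (f s) -> cw (fun u => g (f u)) a b s.
Proof. intros Hf Hg. unfold cw. exact (filterlim_comp _ _ _ f g _ _ _ Hf Hg). Qed.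

Lemma bound_eK c l x yr yi z h : 0 < c -> 0 < l -> 0 < h ->
  x ^ 2 + 4 * yr ^ 2 + z ^ 2 = 1 -> yr ^ 2 + yi ^ 2 = l ^ 2 / (2 * h ^ 2) ->
  Rabs (4 * c * yr * yi * h) <= sqrt 2 * c * l.
Proof.
  intros Hc Hl Hh H1 H2.
  assert (Hyr : yr ^ 2 <= 1/4) by nra.
  assert (Hyi : yi ^ 2 * h ^ 2 <= l ^ 2 / 2).
  { assert ((yr ^ 2 + yi ^ 2) * h ^ 2 = l ^ 2 / 2) by (rewrite H2; field; lra). nra. }
  assert (HK : 0 <= sqrt 2 * c * l).
  { pose proof (sqrt_pos 2). apply Rmult_le_pos; [apply Rmult_le_pos|]; lra. }
  rewrite <- (Rabs_pos_eq _ HK). apply Rsqr_le_abs_0. unfold Rsqr.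
  assert (Hs : sqrt 2 * sqrt 2 = 2) by (apply sqrt_sqrt; lra).
  replace (sqrt 2 * c * l * (sqrt 2 * c * l)) with (2 * c^2 * l^2)
    by (replace 2 with (sqrt 2 * sqrt 2) at 1 by exact Hs; ring).
  replace (4 * c * yr * yi * h * (4 * c * yr * yi * h)) with (16 * c^2 * yr^2 * (yi^2 * h^2)) by ring.
  assert (0 <= c^2) by nra. assert (0 <= yr^2) by nra. assert (0 <= yi^2*h^2) by nra.
  assert (16 * c^2 * yr^2 <= 4 * c^2) by nra.
  nra.
Qed.

Theorem corollaryB2
  (c l w : R) (I : R -> Prop)
  (x yr yi h z x' yr' yi' h' z' : R -> R)
  (tb xi0 t0 : R) :
  0 < c -> 0 < l -> -1 <= w <= 1 ->
  is_interval I ->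
  C1_on I x x' -> C1_on I yr yr' -> C1_on I yi yi' ->
  C1_on I h h' -> C1_on I z z' ->
  (forall t, I t -> 0 < h t) ->
  (forall t, I t -> 0 <= z t) ->
  let xi := fun t => x t ^ 2 + (1 + w) / 2 * z t ^ 2 in
  (forall t, I t -> x' t = (- x t + 4 * c * yr t * yi t + x t * xi t) * h t) ->
  (forall t, I t -> yr' t = (xi t * yr t - c * x t * yi t) * h t) ->
  (forall t, I t -> yi' t = (xi t * yi t + c * x t * yr t) * h t) ->
  (forall t, I t -> z' t = (- ((1 + w) / 2) + xi t) * z t * h t) ->
  (forall t, I t -> h' t = - xi t * h t ^ 2) ->
  (forall t, I t -> x t ^ 2 + 4 * yr t ^ 2 + z t ^ 2 = 1) ->
  (forall t, I t -> yr t ^ 2 + yi t ^ 2 = l ^ 2 / (2 * h t ^ 2)) ->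
  (* time-interval setup *)
  I tb -> 0 < xi0 -> xi tb <= xi0 -> xi0 <= (1 + w) / 2 ->
  I t0 -> tb <= t0 -> xi t0 = xi0 ->
  (forall t, I t -> tb <= t -> xi t = xi0 -> t0 <= t) ->
  forall t, tb <= t <= t0 ->
    Rabs (x t) <=
      1 / Rpower (1 + xi0 * h tb * (t - tb)) (1 / xi0 - 1)
        * (Rabs (x tb) - sqrt 2 * c * l / h tb)
      + sqrt 2 * c * l * (xi0 * (t - tb) + 1 / h tb).
Proof.
  intros Hc Hl Hw HI Cx Cyr Cyi Ch Cz Hhp Hzp xi Ex Eyr Eyi Ez Eh Econ1 Econ2
    Itb Hxi0 Hxib Hxi0w It0 Htb0 Hxit0 Hmin t Ht.
  assert (HIab : forall u, tb <= u <= t0 -> I u).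
  { intros u Hu. apply (HI tb u t0); tauto. }
  assert (Hder : forall f f', C1_on I f f' -> forall s, tb < s < t0 -> is_derive f s (f' s)).
  { intros f f' [Hf _] s Hs.
    apply (hd_lim I f s (f' s) (Rmin (s - tb) (t0 - s)) f).
    - apply Rmin_pos; lra.
    - intros u Hu. apply HIab. pose proof (Rmin_l (s-tb) (t0-s)); pose proof (Rmin_r (s-tb) (t0-s)).
      pose proof (Rabs_def2 _ _ Hu). lra.
    - apply Hf. apply HIab; lra.
    - reflexivity. }
  assert (Hcw : forall f f', C1_on I f f' -> forall s, tb <= s <= t0 -> cw f tb t0 s).
  { intros f f' [Hf _] s Hs. apply (hd_cw I f tb t0 s (f' s) HIab). apply Hf, HIab; lra. }
  assert (Hxile : forall s, tb <= s <= t0 -> xi s <= xi0).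
  { intros s Hs. destruct (Rle_lt_dec (xi s) xi0) as [Hle|Hlt]; [exact Hle|exfalso].
    assert (Hc' : forall u, tb <= u <= s -> cw xi tb s u).
    { intros u Hu. apply cw_sub with tb t0; try lra.
      apply cw_ext with (fun u => x u * x u + (1 + w) / 2 * (z u * z u)).
      { intros; unfold xi; ring. }
      apply cw_plus; [apply cw_mult|apply cw_mult; [apply cw_glob, continuous_const|apply cw_mult]];
        apply Hcw with (1 := Cx) || apply Hcw with (1 := Cz); lra. }
    destruct (last_point xi tb s xi0 ltac:(lra) Hxib Hlt Hc') as [m [Hm1 [Hm2 _]]].
    assert (t0 <= m) by (apply Hmin; [apply HIab; lra|lra|exact Hm2]). lra. }
  assert (Hinvh : forall s, tb <= s <= t0 -> / h s - xi0 * s <= / h tb - xi0 * tb).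
  { intros s Hs. destruct (Req_dec s tb) as [->|Hne]; [lra|].
    replace (/ h s - xi0 * s) with (/ h s + - xi0 * s) by ring.
    replace (/ h tb - xi0 * tb) with (/ h tb + - xi0 * tb) by ring.
    apply (nonincr (fun u => / h u + (- xi0 * u)) (fun u => - h' u / h u ^ 2 + - xi0) tb s).
    - lra.
    - intros u Hu. apply cw_plus.
      + apply cw_comp with (f := h) (g := Rinv).
        * apply cw_sub with tb t0; try lra. apply Hcw with (1 := Ch); lra.
        * apply (ex_derive_continuous (K:=R_AbsRing) (V:=R_NormedModule)).
          pose proof (Hhp u (HIab u ltac:(lra))). auto_derive. lra.
      + apply cw_glob. apply (ex_derive_continuous (K:=R_AbsRing) (V:=R_NormedModule)).
        auto_derive. auto.
    - intros u Hu. apply der_plus.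
      + apply is_derive_inv. apply Hder with (1 := Ch); lra.
        pose proof (Hhp u (HIab u ltac:(lra))). lra.
      + apply is_derive_eq with (- xi0 * 1). 
        * apply der_scal. apply (is_derive_id (K:=R_AbsRing)).
        * simpl; ring.
    - intros u Hu. assert (Iu : I u) by (apply HIab; lra). rewrite (Eh u Iu).
      pose proof (Hhp u Iu). pose proof (Hxile u ltac:(lra)).
      replace (- (- xi u * h u ^ 2) / h u ^ 2 + - xi0) with (xi u - xi0) by (field; lra).
      lra. }
  assert (Ihb : 0 < h tb) by (apply Hhp; exact Itb).
  assert (Hhh : forall s, tb < s < t0 -> h tb / (1 + xi0 * h tb * (s - tb)) <= h s).
  { intros s Hs. pose proof (Hinvh s ltac:(lra)) as H1.
    assert (Ip : 0 < h s) by (apply Hhp, HIab; lra).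
    assert (HD : 0 < 1 + xi0 * h tb * (s - tb)).
    { assert (0 <= xi0 * h tb * (s - tb)) by (apply Rmult_le_pos; [apply Rmult_le_pos|]; lra). lra. }
    assert (H2 : / h s <= (1 + xi0 * h tb * (s - tb)) / h tb).
    { replace ((1 + xi0 * h tb * (s - tb)) / h tb) with (/ h tb + xi0 * (s - tb)) by (field; lra). lra. }
    apply Rinv_le_contravar in H2; [|apply Rinv_0_lt_compat; lra].
    rewrite Rinv_inv in H2.
    replace (h tb / (1 + xi0 * h tb * (s - tb))) with (/ ((1 + xi0 * h tb * (s - tb)) / h tb))
      by (field; lra). exact H2. }
  assert (HK : 0 <= sqrt 2 * c * l).
  { pose proof (sqrt_pos 2). apply Rmult_le_pos; [apply Rmult_le_pos|]; lra. }
  assert (Hx01 : 0 < xi0 <= 1) by lra.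
  assert (Hxo : forall s, tb < s < t0 -> xi s <= xi0) by (intros; apply Hxile; lra).
  assert (HB1 := key x x' h xi (fun s => 4 * c * yr s * yi s) tb t0 (h tb) xi0 (sqrt 2 * c * l)
    Htb0 Hx01 Ihb HK (Hcw x x' Cx) (Hder x x' Cx)
    (fun s Hs => Ex s (HIab s ltac:(lra))) Hxo Hhh
    (fun s Hs => bound_eK c l (x s) (yr s) (yi s) (z s) (h s) Hc Hl (Hhp s (HIab s ltac:(lra)))
       (Econ1 s (HIab s ltac:(lra))) (Econ2 s (HIab s ltac:(lra)))) t Ht).
  assert (HB2 := key (fun s => - x s) (fun s => - x' s) h xi (fun s => - (4 * c * yr s * yi s))
    tb t0 (h tb) xi0 (sqrt 2 * c * l) Htb0 Hx01 Ihb HK).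
  assert (HB2' : - x t <= 1 / Rpower (1 + xi0 * h tb * (t - tb)) (1 / xi0 - 1)
        * (Rabs (x tb) - sqrt 2 * c * l / h tb)
      + sqrt 2 * c * l * (xi0 * (t - tb) + 1 / h tb)).
  { rewrite <- (Rabs_Ropp (x tb)). apply HB2; clear HB2.
    - intros s Hs. apply cw_ext with (fun u => (fun _ => -1) u * x u).
      + intros; ring.
      + apply cw_mult; [apply cw_glob, continuous_const|apply Hcw with (1 := Cx); lra].
    - intros s Hs. exact (is_derive_opp x s (x' s) (Hder x x' Cx s Hs)).
    - intros s Hs. rewrite (Ex s (HIab s ltac:(lra))). ring.
    - exact Hxo.
    - exact Hhh.
    - intros s Hs. replace (- (4 * c * yr s * yi s) * h s) with (- (4 * c * yr s * yi s * h s)) by ring.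
      rewrite Rabs_Ropp. apply bound_eK with (x s) (z s); auto.
      + apply Hhp, HIab; lra.
      + apply Econ1, HIab; lra.
      + apply Econ2, HIab; lra.
    - exact Ht. }
  apply Rabs_le. lra.
Qed.
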